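(* Let $k\in\mathbb{N}$ and let $M_\psi$ be a bounded multiplication operator on $\mathcal{L}^{(k)}$. The following are equivalent: (a) $M_\psi$ is compact on $\mathcal{L}^{(k)}$; (b) $M_\psi$ is compact on $\mathcal{L}^{(k)}_0$; (c) $\psi\in L_0\cap\mathcal{L}^{(k+1)}_0$.
   Context: $T$ is a tree (locally finite, connected, simply connected graph, identified with its vertex set) without terminal vertices, rooted at $o$. $|v|$ is the distance from $o$ to $v$; for $v\ne o$, $v^-$ is the parent of $v$. $T^*=T\setminus\{o\}$, $Df(v)=|f(v)-f(v^-)|$. For $x\ge1$: $\ell_0(x)=1$, $\ell_1(x)=1+\ln x$, $\ell_j(x)=1+\ln\ell_{j-1}(x)$ for $j\ge2$. For $m\in\mathbb{N}$, $\mathcal{L}^{(m)}$ is the space of $f:T\to\mathbb{C}$ with $\sup_{v\in T^*}|v|\prod_{j=0}^{m-1}\ell_j(|v|)Df(v)<\infty$, normed by $\|f\|_m=|f(o)|+\sup_{v\in T^*}|v|\prod_{j=0}^{m-1}\ell_j(|v|)Df(v)$; $\mathcal{L}^{(m)}_0$ is its subspace of $f$ with $\lim_{|v|\to\infty}|v|\prod_{j=0}^{m-1}\ell_j(|v|)Df(v)=0$. $L_0$ is the set of functions $f$ on $T$ with $\lim_{|v|\to\infty}f(v)=0$. $M_\psi f=\psi f$. *)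

(* Defs.v *)
From Stdlib Require Import Reals Lra.
From Coquelicot Require Import Coquelicot.
Open Scope R_scope.

(* A rooted tree T, encoded by its root o, its parent map v |-> v^- and the
   distance |v| to the root.  The graph has edges {v, v^-} for v <> o; the
   depth axioms make it connected and simply connected (every vertex reaches
   o by iterating the parent map, depth decreasing by one at each step). *)
Record rtree := {
  vert :> Type;
  root : vert;
  par : vert -> vert;                 (* v^-, meaningful for v <> root *)
  depth : vert -> nat;
  depth_root : depth root = 0%nat;
  depth_eq0 : forall v, depth v = 0%nat -> v = root;
  depth_par : forall v, v <> root -> depth v = S (depth (par v));
  loc_finite : forall v, exists s : list vert,
      forall w, w <> root -> par w = v -> List.In w s;
  (* no terminal vertices (vertices of degree 1):
     a non-root vertex has a neighbour besides its parent, i.e. a child ... *)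
  no_term : forall v, v <> root -> exists w, w <> root /\ par w = v;
  (* ... and the root does not have exactly one neighbour *)
  no_term_root :
    (forall w, w <> root -> par w <> root) \/
    (exists w1 w2, w1 <> root /\ w2 <> root /\ w1 <> w2 /\
                   par w1 = root /\ par w2 = root)
}.

Fixpoint ell (j : nat) (x : R) : R :=
  match j with
  | O => 1
  | S O => 1 + ln x
  | S j' => 1 + ln (ell j' x)
  end.

Fixpoint ellprod (m : nat) (x : R) : R :=
  match m with
  | O => 1
  | S m' => ellprod m' x * ell m' x
  end.

Definition wt (m : nat) (n : nat) : R := INR n * ellprod m (INR n).

Definition Dif (T : rtree) (f : T -> C) (v : T) : R := Cmod (f v - f (par T v))%C.

Definition wD (T : rtree) (m : nat) (f : T -> C) (v : T) : R :=
  wt m (depth T v) * Dif T f v.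

Definition inL (T : rtree) (m : nat) (f : T -> C) : Prop :=
  exists B, forall v : T, v <> root T -> wD T m f v <= B.

Definition inL0 (T : rtree) (m : nat) (f : T -> C) : Prop :=
  inL T m f /\
  forall eps, 0 < eps -> exists N, forall v : T, v <> root T ->
    (N <= depth T v)%nat -> wD T m f v <= eps.

Definition inLzero (T : rtree) (f : T -> C) : Prop :=
  forall eps, 0 < eps -> exists N, forall v : T, (N <= depth T v)%nat ->
    Cmod (f v) <= eps.

Definition normL (T : rtree) (m : nat) (f : T -> C) : R :=
  Cmod (f (root T)) +
  real (Lub_Rbar (fun x => exists v : T, v <> root T /\ x = wD T m f v)).

Definition Mult (T : rtree) (psi : T -> C) (f : T -> C) : T -> C :=
  fun v => (psi v * f v)%C.

Definition bounded_on (T : rtree) (m : nat) (X : (T -> C) -> Prop)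
  (A : (T -> C) -> (T -> C)) : Prop :=
  (forall f, X f -> X (A f)) /\
  exists K, 0 <= K /\ forall f, X f -> normL T m (A f) <= K * normL T m f.

Definition compact_on (T : rtree) (m : nat) (X : (T -> C) -> Prop)
  (A : (T -> C) -> (T -> C)) : Prop :=
  (forall f, X f -> X (A f)) /\
  forall (f : nat -> T -> C),
    (forall n, X (f n)) ->
    (exists B, forall n, normL T m (f n) <= B) ->
    exists (phi : nat -> nat) (g : T -> C),
      (forall n, (phi n < phi (S n))%nat) /\ X g /\
      is_lim_seq (fun n => normL T m (fun v => (A (f (phi n)) v - g v)%C)) 0.

(* Main.v *)
Require Import Defs.
From Stdlib Require Rtopology.
From Stdlib Require Import Reals Lra Lia Arith Compare_dec FunctionalExtensionality Classical IndefiniteDescription.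
From Coquelicot Require Import Coquelicot.
Open Scope R_scope.

Lemma ln_ge0 x : 1 <= x -> 0 <= ln x.
Proof. intros. rewrite <- ln_1. apply ln_le; lra. Qed.

Lemma ln_le_sub1 x : 0 < x -> ln x <= x - 1.
Proof. intros. pose proof (exp_ineq1_le (ln x)). rewrite exp_ln in H0; lra. Qed.

Lemma ln_diff_up a b : 0 < a -> 0 < b -> ln b - ln a <= (b - a) / a.
Proof.
  intros. rewrite <- ln_div by lra. pose proof (ln_le_sub1 (b/a)).
  assert (b / a - 1 = (b - a)/a) by (field; lra).
  assert (0 < b/a) by (apply Rdiv_lt_0_compat; lra). lra.
Qed.

Lemma ln_diff_low a b : 0 < a -> 0 < b -> (b - a) / b <= ln b - ln a.
Proof.
  intros. pose proof (ln_diff_up b a H0 H).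
  assert ((a - b)/b = - ((b-a)/b)) by (field; lra). lra.
Qed.

Lemma ell_SS i x : ell (S (S i)) x = 1 + ln (ell (S i) x).
Proof. reflexivity. Qed.

Lemma ell_ge1 j x : 1 <= x -> 1 <= ell j x.
Proof.
  intros Hx. destruct j as [|j]. simpl; lra.
  induction j as [|j IH]. simpl. pose proof (ln_ge0 x Hx); lra.
  rewrite ell_SS. pose proof (ln_ge0 _ IH); lra.
Qed.

Lemma ell_mono j x y : 1 <= x -> x <= y -> ell j x <= ell j y.
Proof.
  intros Hx Hy. destruct j as [|j]. simpl; lra.
  induction j as [|j IH]. simpl. pose proof (ln_le x y ltac:(lra) Hy). lra.
  rewrite !ell_SS. pose proof (ell_ge1 (S j) x Hx).
  pose proof (ln_le (ell (S j) x) (ell (S j) y) ltac:(lra) IH). lra.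
Qed.

Lemma ell_at1 j : ell j 1 = 1.
Proof.
  destruct j as [|j]. reflexivity.
  induction j as [|j IH]. simpl. rewrite ln_1; lra.
  rewrite ell_SS, IH, ln_1; lra.
Qed.

Lemma ellprod_ge1 m x : 1 <= x -> 1 <= ellprod m x.
Proof.
  intros Hx. induction m as [|m IH]; simpl. lra.
  pose proof (ell_ge1 m x Hx). nra.
Qed.

Lemma ellprod_mono m x y : 1 <= x -> x <= y -> ellprod m x <= ellprod m y.
Proof.
  intros Hx Hy. induction m as [|m IH]; simpl. lra.
  pose proof (ell_ge1 m x Hx). pose proof (ellprod_ge1 m x Hx).
  pose proof (ell_mono m x y Hx Hy).
  apply Rmult_le_compat; lra.
Qed.

Lemma ellprod_at1 m : ellprod m 1 = 1.
Proof. induction m; simpl. reflexivity. rewrite IHm, ell_at1; lra. Qed.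

Lemma INR_ge1 n : (1 <= n)%nat -> 1 <= INR n.
Proof. intros. apply (le_INR 1 n) in H. simpl in H. lra. Qed.

Lemma wt_ge1 m n : (1 <= n)%nat -> 1 <= wt m n.
Proof.
  intros. unfold wt. pose proof (INR_ge1 n H). pose proof (ellprod_ge1 m _ H0). nra.
Qed.

Lemma wt_pos m n : (1 <= n)%nat -> 0 < wt m n.
Proof. intros. pose proof (wt_ge1 m n H). lra. Qed.

Lemma wt_mono m n p : (1 <= n)%nat -> (n <= p)%nat -> wt m n <= wt m p.
Proof.
  intros. unfold wt. pose proof (INR_ge1 n H). pose proof (le_INR _ _ H0).
  pose proof (ellprod_ge1 m _ H1). pose proof (ellprod_mono m _ _ H1 H2).
  apply Rmult_le_compat; lra.
Qed.

Lemma wt_S m n : wt (S m) n = wt m n * ell m (INR n).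
Proof. unfold wt; simpl. ring. Qed.

Lemma wt_1 m : wt m 1 = 1.
Proof. unfold wt. simpl INR. rewrite ellprod_at1. ring. Qed.

Lemma ell_inc_low i n : (1 <= n)%nat ->
  / wt (S i) (S n) <= ell (S i) (INR (S n)) - ell (S i) (INR n).
Proof.
  intros Hn. pose proof (INR_ge1 n Hn) as Hx.
  rewrite S_INR. set (x := INR n) in *.
  induction i as [|i IH].
  - unfold wt; simpl ellprod. rewrite S_INR. fold x.
    simpl ell. pose proof (ln_diff_low x (x+1) ltac:(lra) ltac:(lra)).
    replace (/ ((x + 1) * (1 * 1))) with ((x + 1 - x) / (x + 1)) by (field; lra). lra.
  - rewrite !ell_SS. rewrite wt_S. replace (INR (S n)) with (x+1) by (rewrite S_INR; reflexivity).
    pose proof (ell_ge1 (S i) x ltac:(lra)).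
    pose proof (ell_ge1 (S i) (x+1) ltac:(lra)).
    pose proof (wt_pos (S i) (S n) ltac:(lia)).
    pose proof (ln_diff_low (ell (S i) x) (ell (S i) (x+1)) ltac:(lra) ltac:(lra)).
    set (a := ell (S i) x) in *. set (b := ell (S i) (x+1)) in *.
    set (w := wt (S i) (S n)) in *.
    assert (/ (w * b) <= (b - a) / b).
    { replace (/ (w*b)) with (/w / b) by (field; lra).
      unfold Rdiv. apply Rmult_le_compat_r. apply Rlt_le, Rinv_0_lt_compat; lra. lra. }
    lra.
Qed.

Lemma ell_inc_up i : exists C, 1 <= C /\ forall n, (1 <= n)%nat ->
  ell (S i) (INR (S n)) - ell (S i) (INR n) <= C / wt (S i) (S n).
Proof.
  induction i as [|i [C [HC IH]]].
  - exists 2. split. lra. intros n Hn. pose proof (INR_ge1 n Hn) as Hx.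
    rewrite S_INR. unfold wt; simpl ellprod. rewrite S_INR. set (x := INR n) in *.
    simpl ell. pose proof (ln_diff_up x (x+1) ltac:(lra) ltac:(lra)).
    assert ((x + 1 - x)/x <= 2 / ((x+1)*(1*1))).
    { apply Rle_trans with (1/x). right; field; lra.
      unfold Rdiv. rewrite Rmult_1_l. apply Rmult_le_reg_l with (x * (x+1)). nra.
      field_simplify; try lra. }
    lra.
  - exists (C * (1 + C)). split. nra. intros n Hn.
    pose proof (INR_ge1 n Hn) as Hx. specialize (IH n Hn).
    rewrite S_INR in *. set (x := INR n) in *.
    rewrite !ell_SS, wt_S. rewrite S_INR. fold x.
    pose proof (ell_ge1 (S i) x ltac:(lra)).
    pose proof (ell_ge1 (S i) (x+1) ltac:(lra)).
    pose proof (wt_ge1 (S i) (S n) ltac:(lia)).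
    pose proof (ln_diff_up (ell (S i) x) (ell (S i) (x+1)) ltac:(lra) ltac:(lra)).
    set (a := ell (S i) x) in *. set (b := ell (S i) (x+1)) in *.
    set (w := wt (S i) (S n)) in *.
    assert (Hcw : C / w <= C). { apply Rmult_le_reg_l with w. lra.
      field_simplify; nra. }
    assert (b <= a * (1 + C)) by nra.
    assert ((b - a) / a <= C * (1 + C) / (w * b)).
    { apply Rle_trans with (C / w / a).
      unfold Rdiv. apply Rmult_le_compat_r. apply Rlt_le, Rinv_0_lt_compat; lra. lra.
      apply Rmult_le_reg_l with (w * a * b). apply Rmult_lt_0_compat; nra.
      field_simplify; try lra. nra. }
    lra.
Qed.

Fixpoint Ssum (k n : nat) : R :=
  match n with O => 0 | S n' => Ssum k n' + / wt k (S n') end.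

Lemma Ssum_ge0 k n : 0 <= Ssum k n.
Proof.
  induction n; simpl. lra.
  pose proof (wt_pos k (S n) ltac:(lia)). pose proof (Rinv_0_lt_compat _ H). lra.
Qed.

Lemma Ssum_mono k n p : (n <= p)%nat -> Ssum k n <= Ssum k p.
Proof.
  induction 1. lra. simpl.
  pose proof (wt_pos k (S m) ltac:(lia)). pose proof (Rinv_0_lt_compat _ H0). lra.
Qed.

Lemma Ssum_pos k n : (1 <= n)%nat -> 0 < Ssum k n.
Proof.
  intros. destruct n. lia. simpl. pose proof (Ssum_ge0 k n).
  pose proof (wt_pos k (S n) ltac:(lia)). pose proof (Rinv_0_lt_compat _ H1). lra.
Qed.

Lemma Ssum_le_ell i n : (1 <= n)%nat -> Ssum (S i) n <= ell (S i) (INR n).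
Proof.
  induction 1.
  - simpl Ssum. change (INR 1) with 1. rewrite wt_1, ell_at1. lra.
  - simpl Ssum. pose proof (ell_inc_low i m H). lra.
Qed.

Lemma Ssum_le_ell' i n : Ssum (S i) n <= ell (S i) (INR (S n)).
Proof.
  destruct n. simpl Ssum. change (INR 1) with 1. pose proof (ell_ge1 (S i) 1 ltac:(lra)). lra.
  pose proof (Ssum_le_ell i (S n) ltac:(lia)).
  pose proof (ell_mono (S i) (INR (S n)) (INR (S (S n))) (INR_ge1 (S n) ltac:(lia))
     (le_INR (S n) (S (S n)) ltac:(lia))). lra.
Qed.

Lemma Ssum_ge_ell i C : 1 <= C -> (forall n, (1 <= n)%nat ->
  ell (S i) (INR (S n)) - ell (S i) (INR n) <= C / wt (S i) (S n)) ->
  forall n, (1 <= n)%nat -> (ell (S i) (INR n) - 1) / C <= Ssum (S i) n.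
Proof.
  intros HC Hup. induction 1.
  - simpl Ssum. change (INR 1) with 1. rewrite wt_1, ell_at1. replace ((1 - 1)/C) with 0 by (field; lra). lra.
  - simpl Ssum. specialize (Hup m H).
    assert ((ell (S i) (INR (S m)) - 1) / C = (ell (S i) (INR m) - 1)/C +
        (ell (S i) (INR (S m)) - ell (S i) (INR m))/C) by (field; lra).
    assert ((ell (S i) (INR (S m)) - ell (S i) (INR m))/C <= / wt (S i) (S m)).
    { apply Rmult_le_reg_l with C. lra.
      pose proof (wt_pos (S i) (S m) ltac:(lia)).
      replace (C * ((ell (S i) (INR (S m)) - ell (S i) (INR m)) / C)) with
        (ell (S i) (INR (S m)) - ell (S i) (INR m)) by (field; lra).
      replace (C * / wt (S i) (S m)) with (C / wt (S i) (S m)) by (unfold Rdiv; ring).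
      lra. }
    lra.
Qed.

Lemma ell_unbounded i M : exists N, forall n, (N <= n)%nat -> M <= ell (S i) (INR n).
Proof.
  revert M. induction i as [|i IH]; intros M.
  - destruct (INR_unbounded (exp M)) as [N HN].
    exists N. intros n Hn. simpl. pose proof (exp_pos M).
    pose proof (le_INR _ _ Hn).
    pose proof (ln_le (exp M) (INR n) ltac:(lra) ltac:(lra)) as HL. rewrite ln_exp in HL. lra.
  - destruct (IH (exp M)) as [N HN]. exists N. intros n Hn.
    rewrite ell_SS. specialize (HN n Hn). pose proof (exp_pos M).
    pose proof (ln_le (exp M) _ ltac:(lra) HN) as HL. rewrite ln_exp in HL. lra.
Qed.

Lemma Ssum_unbounded i M : exists N, forall n, (N <= n)%nat -> M <= Ssum (S i) n.
Proof.
  destruct (ell_inc_up i) as [C [HC Hup]].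
  destruct (ell_unbounded i (C * Rabs M + 1)) as [N HN].
  exists (S N). intros n Hn.
  pose proof (Ssum_ge_ell i C HC Hup n ltac:(lia)). specialize (HN n ltac:(lia)).
  assert (Rabs M <= (ell (S i) (INR n) - 1) / C).
  { apply Rmult_le_reg_l with C. lra. replace (C * ((ell (S i) (INR n) - 1) / C))
      with (ell (S i) (INR n) - 1) by (field; lra). pose proof (Rabs_pos M). nra. }
  pose proof (Rle_abs M). lra.
Qed.

Lemma Ssum_vs_ell i : exists c, 0 < c /\ exists N0, forall n, (N0 <= n)%nat ->
  c * ell (S i) (INR (S n)) <= Ssum (S i) n.
Proof.
  destruct (ell_inc_up i) as [C [HC Hup]].
  exists (/ (2 * C)). split. apply Rinv_0_lt_compat; lra.
  destruct (ell_unbounded i (2 * (C + 1))) as [N HN].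
  exists (S N). intros n Hn.
  pose proof (Ssum_ge_ell i C HC Hup n ltac:(lia)).
  specialize (Hup n ltac:(lia)). specialize (HN (S n) ltac:(lia)).
  pose proof (wt_ge1 (S i) (S n) ltac:(lia)).
  assert (C / wt (S i) (S n) <= C).
  { apply Rmult_le_reg_l with (wt (S i) (S n)). lra. field_simplify; nra. }
  set (a := ell (S i) (INR n)) in *. set (b := ell (S i) (INR (S n))) in *.
  apply Rle_trans with ((a - 1)/C); auto.
  apply Rmult_le_reg_l with (2 * C). lra.
  replace (2 * C * (/ (2 * C) * b)) with b by (field; lra).
  replace (2 * C * ((a - 1) / C)) with (2 * (a - 1)) by (field; lra). lra.
Qed.

Lemma Cmod_tri_sub (x y : C) : Cmod x <= Cmod y + Cmod (x - y)%C.
Proof.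
  replace x with (y + (x - y))%C at 1 by ring. apply Cmod_triangle.
Qed.

Lemma Cmod_sub_tri (x y z : C) : Cmod (x - z)%C <= Cmod (x - y)%C + Cmod (y - z)%C.
Proof.
  replace (x - z)%C with ((x - y) + (y - z))%C by ring. apply Cmod_triangle.
Qed.

Lemma depth_nonroot (T : rtree) v : v <> root T -> (1 <= depth T v)%nat.
Proof.
  intros H. destruct (depth T v) eqn:E. apply depth_eq0 in E. contradiction. lia.
Qed.

Lemma wD_ge0 T m h v : v <> root T -> 0 <= wD T m h v.
Proof.
  intros. unfold wD, Dif. pose proof (wt_pos m _ (depth_nonroot T v H)).
  pose proof (Cmod_ge_0 (h v - h (par T v))%C). nra.
Qed.

Lemma Dif_le_of_wD T m h v b : v <> root T -> wD T m h v <= b ->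
  Dif T h v <= b * / wt m (depth T v).
Proof.
  intros Hv H. unfold wD in H. pose proof (wt_pos m _ (depth_nonroot T v Hv)).
  apply Rmult_le_reg_l with (wt m (depth T v)). lra.
  replace (wt m (depth T v) * (b * / wt m (depth T v))) with b by (field; lra). lra.
Qed.

Lemma PB T m h a b : Cmod (h (root T)) <= a ->
  (forall v, v <> root T -> wD T m h v <= b) ->
  forall v, Cmod (h v) <= a + b * Ssum m (depth T v).
Proof.
  intros Ha Hb v. remember (depth T v) as d. revert v Heqd. induction d; intros v Hd.
  - symmetry in Hd. apply depth_eq0 in Hd. subst. simpl. lra.
  - assert (Hv : v <> root T). { intros E. subst. rewrite depth_root in Hd. discriminate. }
    pose proof (depth_par T v Hv). rewrite <- Hd in H. injection H as H.
    specialize (IHd (par T v) H).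
    pose proof (Dif_le_of_wD T m h v b Hv (Hb v Hv)). rewrite <- Hd in H0.
    unfold Dif in H0. pose proof (Cmod_tri_sub (h v) (h (par T v))).
    simpl Ssum. lra.
Qed.

Definition Eset (T : rtree) m h := fun x => exists v : T, v <> root T /\ x = wD T m h v.

Lemma lub_le T m h B : (forall v, v <> root T -> wD T m h v <= B) -> 0 <= B ->
  real (Lub_Rbar (Eset T m h)) <= B.
Proof.
  intros H HB. destruct (Lub_Rbar_correct (Eset T m h)) as [Hub Hl].
  assert (Hb : is_ub_Rbar (Eset T m h) B).
  { intros x [v [Hv ->]]. simpl. apply H; auto. }
  specialize (Hl _ Hb). destruct (Lub_Rbar (Eset T m h)); simpl in *; auto; lra.
Qed.

Lemma le_lub T m h v : inL T m h -> v <> root T -> wD T m h v <= real (Lub_Rbar (Eset T m h)).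
Proof.
  intros [B HB] Hv. destruct (Lub_Rbar_correct (Eset T m h)) as [Hub Hl].
  assert (Hb : is_ub_Rbar (Eset T m h) B).
  { intros x [w [Hw ->]]. simpl. apply HB; auto. }
  specialize (Hl _ Hb). specialize (Hub (wD T m h v) (ex_intro _ v (conj Hv eq_refl))).
  destruct (Lub_Rbar (Eset T m h)); simpl in *; auto; lra.
Qed.

Lemma lub_ge0 T m h : 0 <= real (Lub_Rbar (Eset T m h)).
Proof.
  destruct (Lub_Rbar_correct (Eset T m h)) as [Hub Hl].
  destruct (Lub_Rbar (Eset T m h)) eqn:E; simpl; try lra.
  destruct (Rle_dec 0 r) as [|Hr]; auto. exfalso.
  assert (Hb : is_ub_Rbar (Eset T m h) m_infty).
  { intros x [w [Hw ->]]. simpl. specialize (Hub _ (ex_intro _ w (conj Hw eq_refl))).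
    simpl in Hub. pose proof (wD_ge0 T m h w Hw). lra. }
  specialize (Hl _ Hb). simpl in Hl. auto.
Qed.

Lemma normL_ge0 T m h : 0 <= normL T m h.
Proof. unfold normL. pose proof (Cmod_ge_0 (h (root T))). pose proof (lub_ge0 T m h).
  unfold Eset in H0. lra. Qed.

Lemma normL_root T m h : Cmod (h (root T)) <= normL T m h.
Proof. unfold normL. pose proof (lub_ge0 T m h). unfold Eset in H. lra. Qed.

Lemma normL_wD T m h v : inL T m h -> v <> root T -> wD T m h v <= normL T m h.
Proof. intros. unfold normL. pose proof (le_lub T m h v H H0). unfold Eset in H1.
  pose proof (Cmod_ge_0 (h (root T))). lra. Qed.

Lemma normL_le T m h B : Cmod (h (root T)) <= B / 2 ->
  (forall v, v <> root T -> wD T m h v <= B / 2) -> normL T m h <= B.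
Proof.
  intros H1 H2. unfold normL. pose proof (Cmod_ge_0 (h (root T))).
  pose proof (lub_le T m h (B/2) H2 ltac:(lra)). unfold Eset in H0. lra.
Qed.

Lemma normL_pointwise T m h v : inL T m h ->
  Cmod (h v) <= normL T m h * (1 + Ssum m (depth T v)).
Proof.
  intros Hh. pose proof (PB T m h (Cmod (h (root T))) (real (Lub_Rbar (Eset T m h)))
    (Rle_refl _) (fun w Hw => le_lub T m h w Hh Hw) v).
  pose proof (lub_ge0 T m h). pose proof (Cmod_ge_0 (h (root T))).
  pose proof (Ssum_ge0 m (depth T v)). unfold normL. unfold Eset in *. nra.
Qed.

Lemma Dif_mult T psi h v :
  Dif T (Mult T psi h) v <= Cmod (psi v) * Dif T h v + Cmod (h (par T v)) * Dif T psi v.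
Proof.
  unfold Dif, Mult.
  replace (psi v * h v - psi (par T v) * h (par T v))%C with
    (psi v * (h v - h (par T v)) + h (par T v) * (psi v - psi (par T v)))%C by ring.
  eapply Rle_trans. apply Cmod_triangle. rewrite !Cmod_mult. lra.
Qed.

Lemma key T i psi h a b v : Cmod (h (root T)) <= a -> 0 <= a -> 0 <= b ->
  (forall w, w <> root T -> wD T (S i) h w <= b) -> v <> root T ->
  wD T (S i) (Mult T psi h) v <= b * Cmod (psi v) + (a + b) * wD T (S (S i)) psi v.
Proof.
  intros Ha Ha0 Hb0 Hb Hv.
  pose proof (depth_par T v Hv) as Hd.
  pose proof (PB T (S i) h a b Ha Hb (par T v)) as Hp.
  pose proof (Ssum_le_ell' i (depth T (par T v))) as Hs. rewrite <- Hd in Hs.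
  pose proof (ell_ge1 (S i) (INR (depth T v)) (INR_ge1 _ (depth_nonroot T v Hv))) as Hl.
  pose proof (Dif_mult T psi h v) as HD.
  pose proof (wt_pos (S i) _ (depth_nonroot T v Hv)) as Hw.
  pose proof (Hb v Hv) as Hbv.
  unfold wD in *. rewrite (wt_S (S i)).
  set (w := wt (S i) (depth T v)) in *. set (l := ell (S i) (INR (depth T v))) in *.
  set (s := Ssum (S i) (depth T (par T v))) in *.
  pose proof (Cmod_ge_0 (psi v)). pose proof (Cmod_ge_0 (h (par T v))).
  assert (0 <= Dif T psi v) by (unfold Dif; apply Cmod_ge_0).
  assert (0 <= Dif T h v) by (unfold Dif; apply Cmod_ge_0).
  assert (Cmod (h (par T v)) <= (a + b) * l) by nra.
  assert (w * Dif T (Mult T psi h) v <= Cmod (psi v) * (w * Dif T h v) +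
     Cmod (h (par T v)) * (w * Dif T psi v)) by nra.
  assert (Cmod (psi v) * (w * Dif T h v) <= b * Cmod (psi v)) by nra.
  assert (Cmod (h (par T v)) * (w * Dif T psi v) <= (a + b) * (w * l * Dif T psi v)).
  { replace ((a + b) * (w * l * Dif T psi v)) with (((a+b) * l) * (w * Dif T psi v)) by ring.
    apply Rmult_le_compat_r. nra. auto. }
  lra.
Qed.

Lemma inL_bound_nonneg T m f : inL T m f -> exists B, 0 <= B /\
  forall v, v <> root T -> wD T m f v <= B.
Proof.
  intros [B HB]. exists (Rmax B 0). split. apply Rmax_r.
  intros. eapply Rle_trans. apply HB; auto. apply Rmax_l.
Qed.

Lemma psi_bdd T m psi : inLzero T psi -> inL T m psi -> exists M, 0 <= M /\
  forall v, Cmod (psi v) <= M.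
Proof.
  intros Hz Hl. destruct (Hz 1 ltac:(lra)) as [N HN].
  destruct (inL_bound_nonneg T m psi Hl) as [B [HB0 HB]].
  pose proof (PB T m psi _ B (Rle_refl _) HB) as HP.
  exists (Rmax 1 (Cmod (psi (root T)) + B * Ssum m N)). split.
  eapply Rle_trans; [|apply Rmax_l]; lra.
  intros v. destruct (le_lt_dec N (depth T v)).
  - eapply Rle_trans; [|apply Rmax_l]. auto.
  - eapply Rle_trans; [|apply Rmax_r]. eapply Rle_trans. apply HP.
    pose proof (Ssum_mono m (depth T v) N ltac:(lia)). nra.
Qed.

Lemma inL_S T i f : inL T (S i) f -> inL T i f.
Proof.
  intros H. destruct (inL_bound_nonneg T _ f H) as [B [HB0 HB]]. exists B.
  intros v Hv. specialize (HB v Hv). unfold wD in *. rewrite wt_S in HB.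
  pose proof (ell_ge1 i (INR (depth T v)) (INR_ge1 _ (depth_nonroot T v Hv))).
  pose proof (wt_pos i _ (depth_nonroot T v Hv)).
  assert (0 <= Dif T f v) by (unfold Dif; apply Cmod_ge_0). nra.
Qed.

Lemma mult0 T i psi f : inLzero T psi -> inL0 T (S (S i)) psi -> inL T (S i) f ->
  inL0 T (S i) (Mult T psi f).
Proof.
  intros Hz [Hp Hp0] Hf.
  destruct (inL_bound_nonneg T _ f Hf) as [b [Hb0 Hb]].
  destruct (inL_bound_nonneg T _ psi Hp) as [Bp [HBp0 HBp]].
  destruct (psi_bdd T _ psi Hz Hp) as [M [HM0 HM]].
  set (a := Cmod (f (root T))). assert (Ha0 : 0 <= a) by apply Cmod_ge_0.
  pose proof (key T i psi f a b) as K.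
  split.
  - exists (b * M + (a + b) * Bp). intros v Hv.
    eapply Rle_trans. apply K; auto. apply Rle_refl.
    specialize (HM v). specialize (HBp v Hv).
    apply Rplus_le_compat; apply Rmult_le_compat_l; lra.
  - intros eps Heps.
    destruct (Hz (eps / 2 / (b + 1))) as [N1 HN1].
    { apply Rdiv_lt_0_compat; lra. }
    destruct (Hp0 (eps / 2 / (a + b + 1))) as [N2 HN2].
    { apply Rdiv_lt_0_compat; lra. }
    exists (Nat.max N1 N2). intros v Hv Hd.
    eapply Rle_trans. apply K; auto. apply Rle_refl.
    specialize (HN1 v ltac:(lia)). specialize (HN2 v Hv ltac:(lia)).
    assert (b * Cmod (psi v) <= eps / 2).
    { apply Rle_trans with ((b+1) * (eps / 2 / (b + 1))).
      pose proof (Cmod_ge_0 (psi v)). nra. right; field; lra. }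
    assert ((a + b) * wD T (S (S i)) psi v <= eps / 2).
    { apply Rle_trans with ((a + b + 1) * (eps / 2 / (a + b + 1))).
      pose proof (wD_ge0 T (S (S i)) psi v Hv). nra. right; field; lra. }
    lra.
Qed.

Definition Tf (T : rtree) k N : T -> C :=
  fun v => RtoC (Ssum k (Nat.min (depth T v) N) ^ 2 / Ssum k N).

Lemma Cmod_RtoC_sub x y : Cmod (RtoC x - RtoC y)%C = Rabs (x - y).
Proof. rewrite <- RtoC_minus, Cmod_R. reflexivity. Qed.

Lemma Tf_root T k N : Tf T k N (root T) = RtoC 0.
Proof. unfold Tf. rewrite depth_root. simpl. f_equal. unfold Rdiv. ring. Qed.

Lemma Tf_wD T k N v : (1 <= N)%nat -> v <> root T -> wD T k (Tf T k N) v <= 2 /\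
  ((N < depth T v)%nat -> wD T k (Tf T k N) v = 0).
Proof.
  intros HN Hv. pose proof (depth_par T v Hv) as Hd.
  pose proof (Ssum_pos k N HN) as HSN.
  unfold wD, Dif, Tf. rewrite Cmod_RtoC_sub.
  destruct (le_lt_dec (depth T v) N) as [Hle|Hlt].
  - rewrite (Nat.min_l (depth T v)) by lia. rewrite (Nat.min_l (depth T (par T v))) by lia.
    split; [|lia].
    rewrite Hd. simpl Ssum. rewrite <- Hd.
    pose proof (wt_pos k (depth T v) (depth_nonroot T v Hv)).
    pose proof (Ssum_mono k (depth T v) N Hle). rewrite Hd in H0. simpl Ssum in H0.
    rewrite <- Hd in H0.
    pose proof (Ssum_mono k (depth T (par T v)) N ltac:(lia)).
    pose proof (Ssum_ge0 k (depth T (par T v))).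
    set (s := Ssum k (depth T (par T v))) in *. set (w := wt k (depth T v)) in *.
    set (S := Ssum k N) in *.
    replace (((s + / w) ^ 2 / S - s ^ 2 / S)) with ((2 * s + / w) / w / S) by (field; lra).
    pose proof (Rinv_0_lt_compat w H).
    rewrite Rabs_right. 2:{ apply Rle_ge. unfold Rdiv. apply Rmult_le_pos.
      apply Rmult_le_pos. lra. lra. apply Rlt_le, Rinv_0_lt_compat; lra. }
    replace (w * ((2 * s + / w) / w / S)) with ((s + (s + / w)) / S) by (field; lra).
    apply Rmult_le_reg_l with S. lra.
    replace (S * ((s + (s + / w)) / S)) with (s + (s + /w)) by (field; lra). lra.
  - rewrite (Nat.min_r (depth T v)) by lia. rewrite (Nat.min_r (depth T (par T v))) by lia.
    rewrite Rminus_diag, Rabs_R0, Rmult_0_r. split; [lra|auto].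
Qed.

Lemma Tf_inL0 T k N : (1 <= N)%nat -> inL0 T k (Tf T k N).
Proof.
  intros HN. split.
  - exists 2. intros v Hv. apply (Tf_wD T k N v HN Hv).
  - intros eps Heps. exists (S N). intros v Hv Hd.
    rewrite (proj2 (Tf_wD T k N v HN Hv)) by lia. lra.
Qed.

Lemma Tf_norm T k N : (1 <= N)%nat -> normL T k (Tf T k N) <= 4.
Proof.
  intros HN. apply normL_le.
  - rewrite Tf_root, Cmod_R, Rabs_R0. lra.
  - intros v Hv. pose proof (Tf_wD T k N v HN Hv). lra.
Qed.

Lemma Tf_val T k N v : (1 <= N)%nat -> Cmod (Tf T k N v) <= Ssum k (depth T v) ^ 2 / Ssum k N.
Proof.
  intros HN. unfold Tf. rewrite Cmod_R. pose proof (Ssum_pos k N HN).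
  pose proof (Ssum_ge0 k (Nat.min (depth T v) N)).
  pose proof (Ssum_mono k (Nat.min (depth T v) N) (depth T v) (Nat.le_min_l _ _)).
  rewrite Rabs_right. 2:{ apply Rle_ge. unfold Rdiv. apply Rmult_le_pos. nra.
    apply Rlt_le, Rinv_0_lt_compat; lra. }
  unfold Rdiv. apply Rmult_le_compat_r. apply Rlt_le, Rinv_0_lt_compat; lra. nra.
Qed.

Lemma Tf_high T k N v : (1 <= N)%nat -> (N <= depth T v)%nat -> Tf T k N v = RtoC (Ssum k N).
Proof.
  intros HN Hd. unfold Tf. rewrite Nat.min_r by lia. f_equal.
  pose proof (Ssum_pos k N HN). field. lra.
Qed.

Lemma incr_ge (phi : nat -> nat) : (forall n, (phi n < phi (S n))%nat) -> forall n, (n <= phi n)%nat.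
Proof. intros H n. induction n. lia. specialize (H n). lia. Qed.

Lemma lim_eps u : is_lim_seq u 0 -> forall eps, 0 < eps -> exists N, forall n, (N <= n)%nat -> Rabs (u n) < eps.
Proof.
  intros H eps Heps. apply is_lim_seq_spec in H. destruct (H (mkposreal eps Heps)) as [N HN].
  exists N. intros n Hn. specialize (HN n Hn). simpl in HN. rewrite Rminus_0_r in HN. auto.
Qed.

Lemma Csub0 (x : C) : (x - RtoC 0)%C = x.
Proof. destruct x as [a b]. unfold Cminus, Cplus, Copp, RtoC. simpl. f_equal; ring. Qed.

Lemma Cmod_sub_le (a b : C) : Cmod (a - b)%C <= Cmod a + Cmod b.
Proof.
  replace (a - b)%C with (a + - b)%C by ring. eapply Rle_trans. apply Cmod_triangle.
  rewrite Cmod_opp. lra.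
Qed.

Lemma Dif_sub T f g v : Dif T (fun w => (f w - g w)%C) v <= Dif T f v + Dif T g v.
Proof.
  unfold Dif. replace (f v - g v - (f (par T v) - g (par T v)))%C with
    ((f v - f (par T v)) + - (g v - g (par T v)))%C by ring.
  eapply Rle_trans. apply Cmod_triangle. rewrite Cmod_opp. lra.
Qed.

Lemma wD_sub T m f g v : v <> root T ->
  wD T m (fun w => (f w - g w)%C) v <= wD T m f v + wD T m g v.
Proof.
  intros Hv. unfold wD. pose proof (wt_pos m _ (depth_nonroot T v Hv)).
  pose proof (Dif_sub T f g v). nra.
Qed.

Lemma inL_sub T m f g : inL T m f -> inL T m g -> inL T m (fun w => (f w - g w)%C).
Proof.
  intros [Bf Hf] [Bg Hg]. exists (Bf + Bg). intros v Hv.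
  pose proof (wD_sub T m f g v Hv). specialize (Hf v Hv). specialize (Hg v Hv). lra.
Qed.

Lemma le_eps_0 x : (forall eps, 0 < eps -> x <= eps) -> x <= 0.
Proof.
  intros H. destruct (Rle_dec x 0); auto. specialize (H (x/2) ltac:(lra)). lra.
Qed.

Lemma gen (T : rtree) i psi (X : (T -> C) -> Prop) :
  compact_on T (S i) X (Mult T psi) ->
  (forall N, (1 <= N)%nat -> X (Tf T (S i) N)) -> (forall g, X g -> inL T (S i) g) ->
  forall Ns : nat -> nat, (forall n, (S n <= Ns n)%nat) -> forall delta, 0 < delta ->
  exists n, forall v, v <> root T -> wD T (S i) (Mult T psi (Tf T (S i) (Ns n))) v < delta.
Proof.
  intros [Hmap Hcomp] HXT HXL Ns HNs delta Hdelta.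
  set (fs := fun n => Tf T (S i) (Ns n)).
  assert (HX1 : forall n, X (fs n)).
  { intros n. apply HXT. specialize (HNs n). lia. }
  assert (HB1 : exists B, forall n, normL T (S i) (fs n) <= B).
  { exists 4. intros n. apply Tf_norm. specialize (HNs n). lia. }
  destruct (Hcomp fs HX1 HB1) as [phi [g [Hinc [Xg Hlim]]]].
  set (h := fun n v => (Mult T psi (fs (phi n)) v - g v)%C).
  assert (Hh : forall n, inL T (S i) (h n)).
  { intros n. apply inL_sub; apply HXL; auto. }
  pose proof (lim_eps _ Hlim) as HL.
  assert (Hg0 : forall v, g v = RtoC 0).
  { intros v. apply Cmod_eq_0. apply Rle_antisym; [|apply Cmod_ge_0].
    apply le_eps_0. intros eps Heps.
    set (sd := Ssum (S i) (depth T v)).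
    assert (Hsd : 0 <= sd) by apply Ssum_ge0.
    destruct (HL (eps / 2 / (1 + sd))) as [N1 HN1].
    { apply Rdiv_lt_0_compat; lra. }
    set (K := 2 * (Cmod (psi v) + 1) * (sd ^ 2 + 1) / eps).
    destruct (Ssum_unbounded i K) as [N2 HN2].
    set (n := Nat.max N1 N2).
    specialize (HN1 n ltac:(lia)).
    pose proof (incr_ge phi Hinc n) as Hpn.
    specialize (HN2 (Ns (phi n)) ltac:(specialize (HNs (phi n)); lia)).
    pose proof (normL_pointwise T (S i) (h n) v (Hh n)) as Hpw.
    fold sd in Hpw.
    pose proof (normL_ge0 T (S i) (h n)) as Hn0.
    rewrite Rabs_right in HN1 by (apply Rle_ge; exact Hn0).
    assert (Hhv : Cmod (h n v) <= eps / 2).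
    { eapply Rle_trans. apply Hpw.
      apply Rle_trans with (eps / 2 / (1 + sd) * (1 + sd)).
      apply Rmult_le_compat_r. lra.
      assert (HN1' : normL T (S i) (h n) < eps/2/(1+sd)) by exact HN1. lra.
      right; field; lra. }
    assert (HSpos : 0 < Ssum (S i) (Ns (phi n))).
    { apply Ssum_pos. specialize (HNs (phi n)). lia. }
    pose proof (Tf_val T (S i) (Ns (phi n)) v ltac:(specialize (HNs (phi n)); lia)) as Hf.
    fold sd in Hf.
    assert (HK : 0 < K). { unfold K. apply Rdiv_lt_0_compat; [|lra].
      pose proof (Cmod_ge_0 (psi v)). nra. }
    assert (Hfv : Cmod (psi v) * Cmod (fs (phi n) v) <= eps / 2).
    { unfold fs. pose proof (Cmod_ge_0 (psi v)).
      pose proof (Cmod_ge_0 (Tf T (S i) (Ns (phi n)) v)).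
      apply Rle_trans with ((Cmod (psi v) + 1) * (sd ^ 2 / Ssum (S i) (Ns (phi n)))).
      nra.
      apply Rle_trans with ((Cmod (psi v) + 1) * (sd ^ 2 / K)).
      apply Rmult_le_compat_l. lra. unfold Rdiv. apply Rmult_le_compat_l. nra.
      apply Rinv_le_contravar; lra.
      unfold K. apply Rle_trans with ((Cmod (psi v) + 1) * ((sd ^ 2 + 1) / (2 * (Cmod (psi v) + 1) * (sd ^ 2 + 1) / eps))).
      apply Rmult_le_compat_l. lra. unfold Rdiv. apply Rmult_le_compat_r.
      apply Rlt_le, Rinv_0_lt_compat. fold K; auto. lra.
      right. field. split. lra. split. nra. lra. }
    assert (E : g v = (Mult T psi (fs (phi n)) v - h n v)%C) by (unfold h; ring).
    rewrite E. eapply Rle_trans. apply Cmod_sub_le.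
    unfold Mult. rewrite Cmod_mult. lra. }
  destruct (HL delta Hdelta) as [N HN]. exists (phi N). intros v Hv.
  specialize (HN N (le_n N)). rewrite Rabs_right in HN by apply Rle_ge, normL_ge0.
  assert (Eh : h N = Mult T psi (Tf T (S i) (Ns (phi N)))).
  { apply functional_extensionality. intros w. unfold h. rewrite Hg0.
    rewrite Csub0. reflexivity. }
  assert (HN' : normL T (S i) (h N) < delta) by exact HN.
  pose proof (normL_wD T (S i) (h N) v (Hh N) Hv). rewrite Eh in H, HN'. lra.
Qed.

Lemma wD_S T m f v : wD T (S m) f v = ell m (INR (depth T v)) * wD T m f v.
Proof. unfold wD. rewrite wt_S. ring. Qed.

Lemma inL_S_of_lim T m f : inL T m f ->
  (forall eps, 0 < eps -> exists N, forall v, v <> root T -> (N <= depth T v)%nat -> wD T (S m) f v <= eps) ->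
  inL T (S m) f.
Proof.
  intros Hf Hl. destruct (inL_bound_nonneg T m f Hf) as [B [HB0 HB]].
  destruct (Hl 1 ltac:(lra)) as [N HN].
  exists (Rmax 1 (ell m (INR (S N)) * B)). intros v Hv.
  destruct (le_lt_dec N (depth T v)).
  - eapply Rle_trans; [|apply Rmax_l]. auto.
  - eapply Rle_trans; [|apply Rmax_r]. rewrite wD_S.
    pose proof (depth_nonroot T v Hv).
    pose proof (ell_mono m (INR (depth T v)) (INR (S N)) (INR_ge1 _ H) (le_INR (depth T v) (S N) ltac:(lia))).
    pose proof (ell_ge1 m (INR (depth T v)) (INR_ge1 _ H)).
    pose proof (wD_ge0 T m f v Hv). specialize (HB v Hv).
    apply Rle_trans with (ell m (INR (depth T v)) * B). apply Rmult_le_compat_l; lra.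
    apply Rmult_le_compat_r; lra.
Qed.

Lemma nec_zero (T : rtree) i psi (X : (T -> C) -> Prop) :
  compact_on T (S i) X (Mult T psi) ->
  (forall N, (1 <= N)%nat -> X (Tf T (S i) N)) -> (forall g, X g -> inL T (S i) g) ->
  inLzero T psi.
Proof.
  intros Hc HXT HXL. destruct (classic (inLzero T psi)) as [|Hn]; auto. exfalso.
  assert (Hex : exists eps, 0 < eps /\ forall N, exists v, (S N <= depth T v)%nat /\ eps < Cmod (psi v)).
  { apply NNPP; intro Hc1; apply Hn; intros eps Heps. apply NNPP; intro Hc2. apply Hc1.
    exists eps; split; auto. intro N. apply NNPP; intro Hc3. apply Hc2. exists (S N).
    intros v Hv. apply Rnot_lt_le. intro. apply Hc3. exists v. auto. }
  destruct Hex as [eps [Heps Hv]].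
  destruct (functional_choice _ Hv) as [vs Hvs].
  destruct (gen T i psi X Hc HXT HXL (fun n => depth T (vs n)) (fun n => proj1 (Hvs n)) eps Heps)
    as [n Hn2].
  set (N := depth T (vs n)).
  assert (HN : (1 <= N)%nat) by (pose proof (proj1 (Hvs n)); unfold N; lia).
  set (h := Mult T psi (Tf T (S i) N)).
  assert (Hr : Cmod (h (root T)) <= 0).
  { unfold h, Mult. rewrite Tf_root, Cmod_mult, Cmod_R, Rabs_R0. lra. }
  pose proof (PB T (S i) h 0 eps Hr (fun v Hv => Rlt_le _ _ (Hn2 v Hv)) (vs n)) as HP.
  fold N in HP. unfold h, Mult in HP. rewrite Tf_high in HP by (auto; unfold N; lia).
  rewrite Cmod_mult, Cmod_R in HP. pose proof (Ssum_pos (S i) N HN).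
  rewrite Rabs_right in HP by lra.
  destruct (Hvs n) as [_ Hlt]. nra.
Qed.

Lemma nec_L0 (T : rtree) i psi (X : (T -> C) -> Prop) :
  compact_on T (S i) X (Mult T psi) ->
  (forall N, (1 <= N)%nat -> X (Tf T (S i) N)) -> (forall g, X g -> inL T (S i) g) ->
  X (fun _ => RtoC 1) -> inL0 T (S (S i)) psi.
Proof.
  intros Hc HXT HXL HX1.
  assert (HpL : inL T (S i) psi).
  { assert (E : Mult T psi (fun _ => RtoC 1) = psi).
    { apply functional_extensionality. intros w. unfold Mult.
      destruct (psi w) as [a b]. unfold Cmult, RtoC. simpl. f_equal; ring. }
    rewrite <- E. apply HXL. apply (proj1 Hc). auto. }
  assert (Hlim : forall eps, 0 < eps -> exists N, forall v, v <> root T ->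
      (N <= depth T v)%nat -> wD T (S (S i)) psi v <= eps).
  { destruct (classic (forall eps, 0 < eps -> exists N, forall v, v <> root T ->
      (N <= depth T v)%nat -> wD T (S (S i)) psi v <= eps)) as [|Hn]; auto. exfalso.
    assert (Hex : exists eps, 0 < eps /\ forall N, exists v, v <> root T /\
       (N <= depth T v)%nat /\ eps < wD T (S (S i)) psi v).
    { apply NNPP; intro Hc1; apply Hn; intros eps Heps. apply NNPP; intro Hc2. apply Hc1.
      exists eps; split; auto. intro N. apply NNPP; intro Hc3. apply Hc2. exists N.
      intros v Hv Hd. apply Rnot_lt_le. intro. apply Hc3. exists v. auto. }
    destruct Hex as [eps [Heps Hv]].
    destruct (Ssum_vs_ell i) as [c [Hc0 [N0 HN0]]].
    destruct (functional_choice _ (fun n => Hv (S (S n) + N0)%nat)) as [vs Hvs].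
    set (Ns := fun n => depth T (par T (vs n))).
    assert (HNs : forall n, (S n <= Ns n)%nat).
    { intros n. destruct (Hvs n) as [Hr [Hd _]]. pose proof (depth_par T _ Hr).
      unfold Ns. lia. }
    destruct (gen T i psi X Hc HXT HXL Ns HNs (c * eps) ltac:(nra)) as [n Hn2].
    destruct (Hvs n) as [Hr [Hd Hlt]].
    specialize (Hn2 (vs n) Hr).
    pose proof (depth_par T _ Hr) as Hdp. fold (Ns n) in Hdp.
    set (v := vs n) in *. set (d' := Ns n) in *.
    assert (H1d : (1 <= d')%nat) by (specialize (HNs n); lia).
    unfold wD, Dif, Mult in Hn2.
    rewrite (Tf_high T (S i) d' v) in Hn2 by (auto; lia).
    rewrite (Tf_high T (S i) d' (par T v)) in Hn2 by (auto; unfold d', Ns; lia).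
    replace (psi v * Ssum (S i) d' - psi (par T v) * Ssum (S i) d')%C with
      ((psi v - psi (par T v)) * RtoC (Ssum (S i) d'))%C in Hn2 by ring.
    rewrite Cmod_mult, Cmod_R in Hn2. pose proof (Ssum_pos (S i) d' H1d).
    rewrite Rabs_right in Hn2 by lra.
    specialize (HN0 d' ltac:(specialize (HNs n); unfold d'; lia)).
    rewrite <- Hdp in HN0.
    unfold wD, Dif in Hlt. rewrite wt_S in Hlt.
    pose proof (wt_pos (S i) _ (depth_nonroot T v Hr)).
    pose proof (Cmod_ge_0 (psi v - psi (par T v))%C).
    set (w := wt (S i) (depth T v)) in *. set (l := ell (S i) (INR (depth T v))) in *.
    set (D := Cmod (psi v - psi (par T v))%C) in *.
    set (s := Ssum (S i) d') in *.
    assert (w * (D * s) >= c * (w * l * D)).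
    { apply Rle_ge. replace (c * (w * l * D)) with ((w * D) * (c * l)) by ring.
      replace (w * (D * s)) with ((w * D) * s) by ring.
      apply Rmult_le_compat_l. nra. auto. }
    nra. }
  split; auto. apply inL_S_of_lim; auto.
Qed.

Definition incr (phi : nat -> nat) := forall n, (phi n < phi (S n))%nat.

Lemma incr_mono phi : incr phi -> forall m n, (m < n)%nat -> (phi m < phi n)%nat.
Proof.
  intros H m n Hmn. induction Hmn. apply H. specialize (H m0). lia.
Qed.

Definition cvC (u : nat -> C) (l : C) :=
  forall eps, 0 < eps -> exists N, forall n, (N <= n)%nat -> Cmod (u n - l)%C <= eps.

Fixpoint iterc (c : nat -> nat -> nat) (n : nat) : nat :=
  match n with O => c O O | S n' => c (S n') (S (iterc c n')) end.

Lemma archi_inv eps : 0 < eps -> exists N, forall n, (N <= n)%nat -> / INR (S n) <= eps.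
Proof.
  intros He. destruct (INR_unbounded (/ eps)) as [N HN]. exists N. intros n Hn.
  pose proof (le_INR _ _ Hn). rewrite S_INR.
  pose proof (Rinv_0_lt_compat _ He). pose proof (pos_INR N).
  rewrite <- (Rinv_inv eps). apply Rinv_le_contravar. auto. lra.
Qed.

Lemma BW_R (u : nat -> R) M : (forall n, Rabs (u n) <= M) ->
  exists phi, incr phi /\ exists l, forall eps, 0 < eps -> exists N, forall n, (N <= n)%nat ->
    Rabs (u (phi n) - l) <= eps.
Proof.
  intros HM.
  destruct (Rtopology.Bolzano_Weierstrass u (fun c => -M <= c <= M) (Rtopology.compact_P3 (-M) M))
    as [l Hl].
  { intros n. specialize (HM n). apply Rabs_le_between in HM. lra. }
  assert (Hc : forall p : nat * nat, exists q, (snd p <= q)%nat /\ Rabs (u q - l) < / INR (S (fst p))).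
  { intros [n N]. simpl. assert (Hp : 0 < / INR (S n)).
    { apply Rinv_0_lt_compat. apply lt_0_INR. lia. }
    destruct (Hl (fun y => Rabs (y - l) < / INR (S n)) N) as [q Hq].
    { exists (mkposreal _ Hp). intros y Hy. unfold Rtopology.disc in Hy. simpl in Hy. auto. }
    exists q. auto. }
  destruct (functional_choice _ Hc) as [c Hc'].
  exists (iterc (fun n N => c (n, N))). split.
  - intros n. simpl.
    pose proof (proj1 (Hc' (S n, S (iterc (fun n N => c (n, N)) n)))) as H1.
    simpl in H1. lia.
  - exists l. intros eps Heps. destruct (archi_inv eps Heps) as [N HN]. exists N.
    intros n Hn. specialize (HN n Hn). apply Rlt_le.
    destruct n as [|n]; simpl.
    + pose proof (proj2 (Hc' (0, 0)%nat)) as H2. simpl in H2. simpl in HN. lra.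
    + pose proof (proj2 (Hc' (S n, S (iterc (fun n N => c (n, N)) n)))) as H2.
      cbn [fst snd] in H2. lra.
Qed.

Lemma Csub_fst (x y : C) : fst (x - y)%C = fst x - fst y.
Proof. destruct x, y. simpl. ring. Qed.
Lemma Csub_snd (x y : C) : snd (x - y)%C = snd x - snd y.
Proof. destruct x, y. simpl. ring. Qed.

Lemma Cmod_le_sum (z : C) : Cmod z <= 2 * (Rabs (fst z) + Rabs (snd z)).
Proof.
  eapply Rle_trans. apply Cmod_2Rmax.
  assert (sqrt 2 <= 2).
  { rewrite <- (sqrt_square 2) at 2 by lra. apply sqrt_le_1_alt. lra. }
  pose proof (Rabs_pos (fst z)). pose proof (Rabs_pos (snd z)).
  assert (Rmax (Rabs (fst z)) (Rabs (snd z)) <= Rabs (fst z) + Rabs (snd z)).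
  { apply Rmax_lub; lra. }
  pose proof (sqrt_pos 2).
  assert (0 <= Rmax (Rabs (fst z)) (Rabs (snd z))). { eapply Rle_trans; [|apply Rmax_l]. auto. }
  nra.
Qed.

Lemma BW_C (u : nat -> C) M : (forall n, Cmod (u n) <= M) ->
  exists phi, incr phi /\ exists l, cvC (fun n => u (phi n)) l.
Proof.
  intros HM.
  assert (H1 : forall n, Rabs (fst (u n)) <= M).
  { intros n. eapply Rle_trans; [|apply (HM n)]. eapply Rle_trans; [|apply Rmax_Cmod]. apply Rmax_l. }
  destruct (BW_R _ M H1) as [p1 [Hp1 [l1 Hl1]]].
  assert (H2 : forall n, Rabs (snd (u (p1 n))) <= M).
  { intros n. eapply Rle_trans; [|apply (HM (p1 n))]. eapply Rle_trans; [|apply Rmax_Cmod]. apply Rmax_r. }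
  destruct (BW_R _ M H2) as [p2 [Hp2 [l2 Hl2]]].
  exists (fun n => p1 (p2 n)). split.
  - intros n. apply incr_mono; auto.
  - exists (l1, l2). intros eps Heps.
    destruct (Hl1 (eps/4) ltac:(lra)) as [N1 HN1]. destruct (Hl2 (eps/4) ltac:(lra)) as [N2 HN2].
    exists (Nat.max N1 N2). intros n Hn.
    eapply Rle_trans. apply Cmod_le_sum. rewrite Csub_fst, Csub_snd. simpl fst. simpl snd.
    pose proof (incr_ge p2 Hp2 n).
    specialize (HN1 (p2 n) ltac:(lia)). specialize (HN2 n ltac:(lia)). lra.
Qed.

Lemma cvC_sub (u v : nat -> C) l j : cvC u l ->
  (forall n, (j <= n)%nat -> exists n', (n <= n')%nat /\ v n = u n') -> cvC v l.
Proof.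
  intros Hu Hv eps Heps. destruct (Hu eps Heps) as [N HN]. exists (Nat.max N j).
  intros n Hn. destruct (Hv n ltac:(lia)) as [n' [Hn' ->]]. apply HN. lia.
Qed.

Lemma BWlist {A : Type} (l : list A) (x : nat -> A -> C) :
  (forall v, exists M, forall n, Cmod (x n v) <= M) ->
  exists phi, incr phi /\ forall v, List.In v l -> exists y, cvC (fun n => x (phi n) v) y.
Proof.
  intros Hb. induction l as [|a l IH].
  - exists (fun n => n). split. intros n; lia. intros v [].
  - destruct IH as [p1 [Hp1 H1]]. destruct (Hb a) as [M HM].
    destruct (BW_C (fun n => x (p1 n) a) M (fun n => HM (p1 n))) as [p2 [Hp2 [y Hy]]].
    exists (fun n => p1 (p2 n)). split.
    + intros n. apply incr_mono; auto.
    + intros v [<-|Hv].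
      * exists y. auto.
      * destruct (H1 v Hv) as [y' Hy']. exists y'. apply (cvC_sub _ _ y' 0 Hy').
        intros n _. exists (p2 n). split; auto. apply incr_ge; auto.
Qed.

Fixpoint Phi (sel : nat * (nat -> nat) -> nat -> nat) (j : nat) : nat -> nat :=
  match j with
  | O => fun n => sel (O, fun m => m) n
  | S j' => fun n => Phi sel j' (sel (S j', Phi sel j') n)
  end.

Lemma diagonal {A : Type} (lv : nat -> list A) (x : nat -> A -> C) :
  (forall v, exists j, List.In v (lv j)) ->
  (forall v, exists M, forall n, Cmod (x n v) <= M) ->
  exists phi, incr phi /\ exists f, forall v, cvC (fun n => x (phi n) v) (f v).
Proof.
  intros Hcov Hb.
  assert (Hs : forall p : nat * (nat -> nat), exists tau, incr tau /\
      forall v, List.In v (lv (fst p)) -> exists y, cvC (fun n => x (snd p (tau n)) v) y).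
  { intros [j sigma]. simpl. apply (BWlist (lv j) (fun n v => x (sigma n) v)).
    intros v. destruct (Hb v) as [M HM]. exists M. auto. }
  destruct (functional_choice _ Hs) as [sel Hsel].
  assert (Hinc : forall j, incr (Phi sel j)).
  { induction j; simpl. apply (proj1 (Hsel (O, fun m => m))).
    intros n. apply incr_mono; auto. apply (proj1 (Hsel (S j, Phi sel j))). }
  assert (Hconv : forall j v, List.In v (lv j) -> exists y, cvC (fun n => x (Phi sel j n) v) y).
  { intros [|j] v Hv; simpl.
    - apply (proj2 (Hsel (O, fun m => m))). auto.
    - apply (proj2 (Hsel (S j, Phi sel j))). auto. }
  assert (Hrel : forall j m, (j <= m)%nat -> forall n, exists n', (n <= n')%nat /\ Phi sel m n = Phi sel j n').
  { intros j m Hjm. induction Hjm; intros n.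
    - exists n. auto.
    - simpl. destruct (IHHjm (sel (S m, Phi sel m) n)) as [n' [Hn' E]].
      exists n'. split; auto. pose proof (incr_ge _ (proj1 (Hsel (S m, Phi sel m))) n). lia. }
  exists (fun n => Phi sel n n). split.
  - intros n. simpl. apply incr_mono; auto.
    pose proof (incr_ge _ (proj1 (Hsel (S n, Phi sel n))) (S n)). lia.
  - assert (Hy : forall v, exists y, cvC (fun n => x (Phi sel n n) v) y).
    { intros v. destruct (Hcov v) as [j Hj]. destruct (Hconv j v Hj) as [y Hy].
      exists y. apply (cvC_sub _ _ y j Hy). intros n Hn.
      destruct (Hrel j n Hn n) as [n' [Hn' E]]. exists n'. rewrite E. auto. }
    destruct (functional_choice _ Hy) as [f Hf]. exists f. auto.
Qed.

Fixpoint lvl (T : rtree) (ch : T -> list T) (n : nat) : list T :=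
  match n with O => root T :: nil | S n' => List.flat_map ch (lvl T ch n') end.

Lemma levels (T : rtree) : exists lv : nat -> list T, forall v, List.In v (lv (depth T v)).
Proof.
  destruct (functional_choice _ (loc_finite T)) as [ch Hch].
  exists (lvl T ch). intros v. remember (depth T v) as d. revert v Heqd.
  induction d; intros v Hd.
  - symmetry in Hd. apply depth_eq0 in Hd. subst. simpl. auto.
  - assert (Hv : v <> root T). { intros E. subst. rewrite depth_root in Hd. discriminate. }
    pose proof (depth_par T v Hv). rewrite <- Hd in H. injection H as H.
    simpl. apply List.in_flat_map. exists (par T v). split. apply IHd; auto.
    apply Hch; auto.
Qed.

Lemma ball (T : rtree) (lv : nat -> list T) (Hlv : forall v, List.In v (lv (depth T v))) N :
  exists l : list T, forall v, (depth T v <= N)%nat -> List.In v l.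
Proof.
  exists (List.flat_map lv (List.seq 0 (S N))). intros v Hv.
  apply List.in_flat_map. exists (depth T v). split; auto.
  apply List.in_seq. lia.
Qed.

Lemma unif {A : Type} (l : list A) (h : nat -> A -> C) :
  (forall v, List.In v l -> cvC (fun n => h n v) (RtoC 0)) ->
  forall eps, 0 < eps -> exists N, forall n, (N <= n)%nat -> forall v, List.In v l -> Cmod (h n v) <= eps.
Proof.
  intros H eps Heps. induction l as [|a l IH].
  - exists O. intros n _ v [].
  - destruct IH as [N1 HN1]. { intros v Hv. apply H. right. auto. }
    destruct (H a (or_introl eq_refl) eps Heps) as [N2 HN2].
    exists (Nat.max N1 N2). intros n Hn v [<-|Hv].
    + specialize (HN2 n ltac:(lia)). rewrite Csub0 in HN2. auto.
    + apply HN1; auto. lia.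
Qed.

Lemma Dif_le_close T f g v : Dif T f v <= Dif T g v + Cmod (f v - g v)%C + Cmod (f (par T v) - g (par T v))%C.
Proof.
  unfold Dif. replace (f v - f (par T v))%C with
    ((g v - g (par T v)) + (f v - g v) + - (f (par T v) - g (par T v)))%C by ring.
  eapply Rle_trans. apply Cmod_triangle. eapply Rle_trans. apply Rplus_le_compat_r. apply Cmod_triangle.
  rewrite Cmod_opp. lra.
Qed.

Lemma suff (T : rtree) i psi (X : (T -> C) -> Prop) :
  inLzero T psi -> inL0 T (S (S i)) psi ->
  (forall f, X f -> inL T (S i) f) -> (forall f, inL0 T (S i) f -> X f) ->
  compact_on T (S i) X (Mult T psi).
Proof.
  intros Hz Hp HXL HX0. split.
  { intros f Hf. apply HX0. apply mult0; auto. }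
  intros fs HXf [B HB].
  assert (HfL : forall n, inL T (S i) (fs n)) by (intros; apply HXL; auto).
  assert (HB0 : 0 <= B) by (eapply Rle_trans; [apply (normL_ge0 T (S i) (fs O))|apply HB]).
  assert (Hpt : forall v, exists M, forall n, Cmod (fs n v) <= M).
  { intros v. exists (B * (1 + Ssum (S i) (depth T v))). intros n.
    eapply Rle_trans. apply normL_pointwise; auto. apply Rmult_le_compat_r.
    pose proof (Ssum_ge0 (S i) (depth T v)); lra. auto. }
  destruct (levels T) as [lv Hlv].
  destruct (diagonal lv fs (fun v => ex_intro (fun j => List.In v (lv j)) (depth T v) (Hlv v)) Hpt) as [phi [Hinc [f Hf]]].
  assert (Hfr : Cmod (f (root T)) <= B).
  { apply Rle_trans with (B + 0); [|lra]. apply Rle_trans with (B + 0). 2: lra.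
    assert (forall eps, 0 < eps -> Cmod (f (root T)) <= B + eps).
    { intros eps Heps. destruct (Hf (root T) eps Heps) as [N HN]. specialize (HN N (le_n N)).
      pose proof (Cmod_tri_sub (f (root T)) (fs (phi N) (root T))).
      pose proof (normL_root T (S i) (fs (phi N))). specialize (HB (phi N)).
      replace (f (root T) - fs (phi N) (root T))%C with (- (fs (phi N) (root T) - f (root T)))%C in H by ring.
      rewrite Cmod_opp in H. lra. }
    apply Rminus_le. rewrite Rplus_0_r. apply le_eps_0. intros eps Heps. specialize (H eps Heps). lra. }
  assert (HfD : forall v, v <> root T -> wD T (S i) f v <= B).
  { intros v Hv. apply Rminus_le. apply le_eps_0. intros eps Heps.
    set (w := wt (S i) (depth T v)).
    assert (Hw : 0 < w) by apply (wt_pos _ _ (depth_nonroot T v Hv)).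
    destruct (Hf v (eps / 2 / w)) as [N1 HN1]. apply Rdiv_lt_0_compat; lra.
    destruct (Hf (par T v) (eps / 2 / w)) as [N2 HN2]. apply Rdiv_lt_0_compat; lra.
    set (n := Nat.max N1 N2). specialize (HN1 n ltac:(lia)). specialize (HN2 n ltac:(lia)).
    pose proof (Dif_le_close T f (fs (phi n)) v) as HD.
    replace (f v - fs (phi n) v)%C with (- (fs (phi n) v - f v))%C in HD by ring.
    replace (f (par T v) - fs (phi n) (par T v))%C with (- (fs (phi n) (par T v) - f (par T v)))%C in HD by ring.
    rewrite !Cmod_opp in HD.
    pose proof (normL_wD T (S i) (fs (phi n)) v (HfL _) Hv). specialize (HB (phi n)).
    unfold wD in *. fold w in H. fold w.
    assert (w * Dif T f v <= w * Dif T (fs (phi n)) v + w * (eps/2/w) + w * (eps/2/w)) by nra.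
    replace (w * (eps / 2 / w)) with (eps/2) in H0 by (field; lra). lra. }
  assert (HfL0 : inL T (S i) f) by (exists B; auto).
  exists phi, (Mult T psi f). split; auto. split.
  { apply HX0. apply mult0; auto. }
  destruct Hp as [HpL Hp0].
  destruct (psi_bdd T _ psi Hz HpL) as [M [HM0 HM]].
  apply is_lim_seq_spec. intros [eps Heps]. simpl.
  set (e := eps / 2).
  set (H := fun n v => (fs (phi n) v - f v)%C).
  assert (EH : forall n, (fun v => (Mult T psi (fs (phi n)) v - Mult T psi f v)%C) = Mult T psi (H n)).
  { intros n. apply functional_extensionality. intros v. unfold Mult, H. ring. }
  assert (HHD : forall n v, v <> root T -> wD T (S i) (H n) v <= 2 * B).
  { intros n v Hv. unfold H. eapply Rle_trans. apply wD_sub; auto.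
    pose proof (normL_wD T (S i) (fs (phi n)) v (HfL _) Hv). specialize (HB (phi n)).
    specialize (HfD v Hv). lra. }
  destruct (Hz (e / 4 / (2 * B + 1))) as [N1 HN1]. { apply Rdiv_lt_0_compat; unfold e; lra. }
  destruct (Hp0 (e / 4 / (2 * B + 2))) as [N2 HN2]. { apply Rdiv_lt_0_compat; unfold e; lra. }
  set (Nd := S (Nat.max N1 N2)).
  set (W := wt (S i) Nd).
  assert (HW : 1 <= W) by (apply wt_ge1; unfold Nd; lia).
  set (eta := Rmin 1 (e / (4 * (W * M + 1)))).
  assert (Heta0 : 0 < eta).
  { apply Rmin_glb_lt. lra. apply Rdiv_lt_0_compat. unfold e; lra. nra. }
  assert (Heta1 : eta <= 1) by apply Rmin_l.
  assert (Heta2 : eta <= e / (4 * (W * M + 1))) by apply Rmin_r.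
  destruct (ball T lv Hlv Nd) as [bl Hbl].
  destruct (unif bl H) with (eps := eta) as [N3 HN3]; auto.
  { intros v _ eps' Heps'. destruct (Hf v eps' Heps') as [N HN]. exists N. intros n Hn.
    rewrite Csub0. unfold H. auto. }
  exists N3. intros n Hn.
  rewrite Rminus_0_r. rewrite Rabs_right by (apply Rle_ge, normL_ge0).
  rewrite EH.
  assert (Hroot : Cmod (H n (root T)) <= eta).
  { apply HN3; auto. apply Hbl. rewrite depth_root. lia. }
  apply Rle_lt_trans with e; [|unfold e; lra].
  apply normL_le.
  - unfold Mult. rewrite Cmod_mult. pose proof (HM (root T)).
    pose proof (Cmod_ge_0 (H n (root T))).
    apply Rle_trans with (M * eta). apply Rmult_le_compat; auto; apply Cmod_ge_0.
    apply Rle_trans with (M * (e / (4 * (W * M + 1)))). apply Rmult_le_compat_l; auto.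
    apply Rmult_le_reg_l with (4 * (W * M + 1)). nra.
    replace (4 * (W * M + 1) * (M * (e / (4 * (W * M + 1))))) with (M * e) by (field; nra).
    assert (0 <= (W - 1) * M * e) by (apply Rmult_le_pos; [apply Rmult_le_pos|]; unfold e; lra).
    assert (0 <= M * e) by (apply Rmult_le_pos; unfold e; lra).
    replace (4 * (W * M + 1) * (e / 2)) with (2 * (W * M * e) + 2 * e) by field.
    unfold e in *. nra.
  - intros v Hv. destruct (le_lt_dec Nd (depth T v)) as [Hd|Hd].
    + eapply Rle_trans. apply (key T i psi (H n) 1 (2 * B)); auto; lra.
      specialize (HN1 v ltac:(unfold Nd in Hd; lia)). specialize (HN2 v Hv ltac:(unfold Nd in Hd; lia)).
      assert (2 * B * Cmod (psi v) <= e / 4).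
      { apply Rle_trans with ((2 * B + 1) * (e / 4 / (2 * B + 1))).
        pose proof (Cmod_ge_0 (psi v)). nra. right; field; lra. }
      assert ((1 + 2 * B) * wD T (S (S i)) psi v <= e / 4).
      { apply Rle_trans with ((2 * B + 2) * (e / 4 / (2 * B + 2))).
        pose proof (wD_ge0 T (S (S i)) psi v Hv). nra. right; field; lra. }
      unfold e in *. lra.
    + pose proof (depth_par T v Hv) as Hdp.
      assert (Hv1 : Cmod (H n v) <= eta) by (apply HN3; auto; apply Hbl; lia).
      assert (Hv2 : Cmod (H n (par T v)) <= eta) by (apply HN3; auto; apply Hbl; lia).
      unfold wD, Dif, Mult.
      pose proof (Cmod_sub_le (psi v * H n v) (psi (par T v) * H n (par T v))) as Hs.
      rewrite !Cmod_mult in Hs.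
      pose proof (HM v). pose proof (HM (par T v)).
      pose proof (Cmod_ge_0 (psi v)). pose proof (Cmod_ge_0 (psi (par T v))).
      pose proof (Cmod_ge_0 (H n v)). pose proof (Cmod_ge_0 (H n (par T v))).
      assert (Hs2 : Cmod (psi v * H n v - psi (par T v) * H n (par T v))%C <= 2 * M * eta).
      { eapply Rle_trans. apply Hs.
        assert (Cmod (psi v) * Cmod (H n v) <= M * eta) by (apply Rmult_le_compat; auto).
        assert (Cmod (psi (par T v)) * Cmod (H n (par T v)) <= M * eta) by (apply Rmult_le_compat; auto).
        lra. }
      pose proof (wt_mono (S i) (depth T v) Nd (depth_nonroot T v Hv) ltac:(lia)) as Hwm.
      fold W in Hwm.
      pose proof (wt_pos (S i) _ (depth_nonroot T v Hv)).
      pose proof (Cmod_ge_0 (psi v * H n v - psi (par T v) * H n (par T v))%C).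
      apply Rle_trans with (W * (2 * M * eta)). apply Rmult_le_compat; auto; lra.
      apply Rle_trans with (W * (2 * M * (e / (4 * (W * M + 1))))).
      apply Rmult_le_compat_l. lra. apply Rmult_le_compat_l. lra. auto.
      apply Rmult_le_reg_l with (4 * (W * M + 1)). nra.
      replace (4 * (W * M + 1) * (W * (2 * M * (e / (4 * (W * M + 1)))))) with (2 * W * M * e) by (field; nra).
      unfold e. nra.
Qed.

Theorem theorem6p2 (T : rtree) (k : nat) (psi : T -> C) :
  (1 <= k)%nat ->
  bounded_on T k (inL T k) (Mult T psi) ->
  (compact_on T k (inL T k) (Mult T psi) <->
   compact_on T k (inL0 T k) (Mult T psi)) /\
  (compact_on T k (inL0 T k) (Mult T psi) <->
   (inLzero T psi /\ inL0 T (S k) psi)).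
Proof.
  intros Hk _. destruct k as [|i]. lia.
  assert (HT : forall N, (1 <= N)%nat -> inL0 T (S i) (Tf T (S i) N)) by (intros; apply Tf_inL0; auto).
  assert (H1 : inL0 T (S i) (fun _ => RtoC 1)).
  { split. exists 0. intros v Hv. unfold wD, Dif. rewrite Cmod_RtoC_sub, Rminus_diag, Rabs_R0. lra.
    intros eps Heps. exists O. intros v Hv _. unfold wD, Dif.
    rewrite Cmod_RtoC_sub, Rminus_diag, Rabs_R0. lra. }
  assert (A2C : compact_on T (S i) (inL T (S i)) (Mult T psi) -> inLzero T psi /\ inL0 T (S (S i)) psi).
  { intros Hc. split.
    - apply (nec_zero T i psi (inL T (S i))); auto. intros N HN. apply HT; auto.
    - apply (nec_L0 T i psi (inL T (S i))); auto. intros N HN. apply HT; auto. apply H1. }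
  assert (B2C : compact_on T (S i) (inL0 T (S i)) (Mult T psi) -> inLzero T psi /\ inL0 T (S (S i)) psi).
  { intros Hc. split.
    - apply (nec_zero T i psi (inL0 T (S i))); auto. intros g Hg; apply Hg.
    - apply (nec_L0 T i psi (inL0 T (S i))); auto. intros g Hg; apply Hg. }
  assert (C2A : inLzero T psi /\ inL0 T (S (S i)) psi -> compact_on T (S i) (inL T (S i)) (Mult T psi)).
  { intros [Hz Hp]. apply suff; auto. intros f Hf; apply Hf. }
  assert (C2B : inLzero T psi /\ inL0 T (S (S i)) psi -> compact_on T (S i) (inL0 T (S i)) (Mult T psi)).
  { intros [Hz Hp]. apply suff; auto. intros f Hf; apply Hf. }
  split; split; auto.
Qed.
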